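(* Let $M=\bigoplus_{\mathbf a\in\mathbb Z^d}M_{\mathbf a}$ be a $\mathbb Z^d$-graded left $D(R_A)$-module (i.e. $D(R_A)_{\mathbf b}M_{\mathbf a}\subseteq M_{\mathbf a+\mathbf b}$) which is simple as a graded module (it has no nonzero proper $\mathbb Z^d$-graded submodules). Then $M$ is isomorphic to $L(\boldsymbol\alpha)$ as a left $D(R_A)$-module for some $\boldsymbol\alpha\in\mathbb C^d$.
   Context: $A\subset\mathbb Z^d$ is a finite set generating the group $\mathbb Z^d$; $R_A=\mathbb C[\mathbb NA]\subseteq\mathbb C[t_1^{\pm1},\dots,t_d^{\pm1}]$; $D(R_A)=\{P\in\mathbb C[t^{\pm1}]\langle\partial_1,\dots,\partial_d\rangle: P(R_A)\subseteq R_A\}$; $s_j=t_j\partial_j$; $D(R_A)_{\mathbf a}=\{P\in D(R_A):[s_j,P]=a_jP\ \forall j\}$, giving $D(R_A)=\bigoplus_{\mathbf a\in\mathbb Z^d}D(R_A)_{\mathbf a}$. $M(\boldsymbol\alpha)=D(R_A)/\sum_iD(R_A)(s_i-\alpha_i)$; in the category $\mathcal O$ of left $D(R_A)$-modules that are direct sums of finite-dimensional weight spaces $M_{\boldsymbol\lambda}=\{x:f(s)x=f(\boldsymbol\lambda)x\ \forall f\in\mathbb C[s]\}$, $M(\boldsymbol\alpha)$ has a unique simple quotient, denoted $L(\boldsymbol\alpha)$. *)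

(* Defs.v *)
From mathcomp Require Import all_boot all_algebra.
From mathcomp Require Import complex Rstruct.
Set Implicit Arguments. Unset Strict Implicit. Unset Printing Implicit Defensive.
Import GRing.Theory Num.Theory.
Local Open Scope ring_scope.

Definition C : numClosedFieldType := Rdefinitions.R[i].

Definition Zd (d : nat) := 'rV[int]_d.
Definition ev (d : nat) (j : 'I_d) : Zd d := delta_mx 0 j.

(* Laurent polynomials are encoded by their coefficient functions
   Z^d -> C (coefficient of t^c).  We let operators act on the space F d of all
   coefficient functions; the Laurent polynomial ring C[t^{+-1}] is the subspace
   of finitely supported ones. *)
Definition F (d : nat) := Zd d -> C.

(* multiplication by t_j, by t_j^{-1}, the derivation d/dt_j, scalars *)
Definition tmul d (j : 'I_d) (p : F d) : F d := fun c => p (c - ev j).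
Definition tinv d (j : 'I_d) (p : F d) : F d := fun c => p (c + ev j).
Definition dpart d (j : 'I_d) (p : F d) : F d :=
  fun c => ((c 0 j) + 1)%:~R * p (c + ev j).
Definition scal d (l : C) (p : F d) : F d := fun c => l * p c.

Definition opadd d (P Q : F d -> F d) : F d -> F d := fun p c => P p c + Q p c.
Definition opcomp d (P Q : F d -> F d) : F d -> F d := fun p => P (Q p).

Inductive WeylOp (d : nat) : (F d -> F d) -> Prop :=
  | W_scal (l : C) : WeylOp (scal l)
  | W_t (j : 'I_d) : WeylOp (tmul j)
  | W_tinv (j : 'I_d) : WeylOp (tinv j)
  | W_d (j : 'I_d) : WeylOp (dpart j)
  | W_add P Q : WeylOp P -> WeylOp Q -> WeylOp (opadd P Q)
  | W_comp P Q : WeylOp P -> WeylOp Q -> WeylOp (opcomp P Q).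

Definition sop d (j : 'I_d) : F d -> F d := opcomp (tmul j) (dpart j).

Definition inNA d (A : seq (Zd d)) (c : Zd d) : Prop :=
  exists k : 'I_(size A) -> nat, c = \sum_(i < size A) (A`_i *+ k i).

Definition generates_Zd d (A : seq (Zd d)) : Prop :=
  forall c : Zd d, exists z : 'I_(size A) -> int, c = \sum_(i < size A) (A`_i *~ z i).

Definition inRA d (A : seq (Zd d)) (p : F d) : Prop :=
  (exists s : seq (Zd d), forall c, p c != 0 -> c \in s) /\
  (forall c, p c != 0 -> inNA A c).

Definition inD d (A : seq (Zd d)) (P : F d -> F d) : Prop :=
  WeylOp P /\ forall p, inRA A p -> inRA A (P p).

Definition inDdeg d (A : seq (Zd d)) (a : Zd d) (P : F d -> F d) : Prop :=
  inD A P /\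
  forall (j : 'I_d) (p : F d) (c : Zd d),
    sop j (P p) c - P (sop j p) c = (a 0 j)%:~R * P p c.

Definition isDModule d (A : seq (Zd d)) (M : zmodType) (act : (F d -> F d) -> M -> M)
  : Prop :=
  [/\ forall P x y, inD A P -> act P (x + y) = act P x + act P y,
      forall P Q x, inD A P -> inD A Q -> act (opadd P Q) x = act P x + act Q x,
      forall P Q x, inD A P -> inD A Q -> act (opcomp P Q) x = act P (act Q x)
    & forall x, act id x = x].

Definition isDSubmodule d (A : seq (Zd d)) (M : zmodType) (act : (F d -> F d) -> M -> M)
  (N : M -> Prop) : Prop :=
  [/\ N 0, forall x y, N x -> N y -> N (x + y)
    & forall P x, inD A P -> N x -> N (act P x)].

Definition isGraded d (A : seq (Zd d)) (M : zmodType) (act : (F d -> F d) -> M -> M)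
  (grade : Zd d -> M -> Prop) : Prop :=
  [/\ forall a, grade a 0,
      forall a x y, grade a x -> grade a y -> grade a (x - y),
      (forall x, exists (s : seq (Zd d)) (f : Zd d -> M),
          [/\ uniq s, forall a, grade a (f a) & x = \sum_(a <- s) f a]),
      (forall (s : seq (Zd d)) (f : Zd d -> M), uniq s ->
          (forall a, a \in s -> grade a (f a)) -> \sum_(a <- s) f a = 0 ->
          forall a, a \in s -> f a = 0)
    & forall b a P x, inDdeg A b P -> grade a x -> grade (a + b) (act P x)].

Definition isGradedSubmodule d (A : seq (Zd d)) (M : zmodType)
  (act : (F d -> F d) -> M -> M) (grade : Zd d -> M -> Prop) (N : M -> Prop) : Prop :=
  isDSubmodule A act N /\
  forall x (s : seq (Zd d)) (f : Zd d -> M), N x -> uniq s ->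
    (forall a, a \in s -> grade a (f a)) -> x = \sum_(a <- s) f a ->
    forall a, a \in s -> N (f a).

Definition gradedSimple d (A : seq (Zd d)) (M : zmodType)
  (act : (F d -> F d) -> M -> M) (grade : Zd d -> M -> Prop) : Prop :=
  (exists x : M, x != 0) /\
  forall N, isGradedSubmodule A act grade N ->
    (forall x, N x -> x = 0) \/ (forall x, N x).

Definition DSimple d (A : seq (Zd d)) (M : zmodType) (act : (F d -> F d) -> M -> M)
  : Prop :=
  (exists x : M, x != 0) /\
  forall N, isDSubmodule A act N -> (forall x, N x -> x = 0) \/ (forall x, N x).

(* M(alpha) = D(R_A) / sum_i D(R_A)(s_i - alpha_i).  A surjective D(R_A)-linear
   map M(alpha) -> M is the same as a vector m in M with (s_i - alpha_i) m = 0
   for all i and D(R_A) m = M (universal property of the cyclic module M(alpha)).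
   L(alpha) is the unique simple quotient of M(alpha); hence M is isomorphic to
   L(alpha) iff M is a simple D(R_A)-module that is a quotient of M(alpha). *)
Definition isoL d (A : seq (Zd d)) (M : zmodType) (act : (F d -> F d) -> M -> M)
  (alpha : 'I_d -> C) : Prop :=
  DSimple A act /\
  exists m : M,
    (forall i : 'I_d, act (sop i) m = act (scal (alpha i)) m) /\
    (forall x : M, exists P, inD A P /\ act P m = x).

(* Main.v *)
Require Import Defs.
From mathcomp Require Import all_boot all_algebra.
From mathcomp Require Import complex Rstruct ring.
From Stdlib Require Import FunctionalExtensionality ClassicalEpsilon Classical.
From Stdlib Require Import Runcountable FinFun.
Import GRing.Theory Num.Theory.
Set Implicit Arguments. Unset Strict Implicit. Unset Printing Implicit Defensive.


Local Notation RR := Rdefinitions.R.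

Lemma finite_fiber (n : nat) : forall (P : RR -> Prop),
  (forall l : seq RR, uniq l -> (forall r, r \in l -> P r) -> size l <= n) ->
  exists l : seq RR, forall r, P r -> r \in l.
Proof.
elim: n => [|n IH] P H.
  exists [::] => r Pr.
  have : size [:: r] <= 0.
    by apply: H => // r'; rewrite mem_seq1 => /eqP ->.
  by [].
case: (classic (exists r0, P r0)) => [[r0 P0]|np]; last first.
  by exists [::] => r Pr; exfalso; apply: np; exists r.
have H' : forall l : seq RR, uniq l -> (forall r, r \in l -> P r /\ r <> r0) -> size l <= n.
  move=> l ul Hl.
  have : size (r0 :: l) <= n.+1.
    apply: H.
      rewrite /= ul andbT; apply/negP => /Hl [] //.
    by move=> r; rewrite inE => /orP [/eqP ->|/Hl []].
  by [].
have [l Hl] := IH _ H'.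
exists (r0 :: l) => r Pr; rewrite inE.
case: (eqVneq r r0) => [//|ne]; rewrite Hl ?orbT //; split => // E.
by rewrite E eqxx in ne.
Qed.

Definition sbool (P : Prop) : bool := if excluded_middle_informative P then true else false.
Lemma sboolP (P : Prop) : sbool P <-> P.
Proof. by rewrite /sbool; case: excluded_middle_informative. Qed.

Section Count.
Variable v : RR -> nat.
Hypothesis vinj : forall r1 r2, v r1 = v r2 -> r1 = r2.

Definition Sb (k : nat) := sbool (exists r, v r = k).
Definition cnt (N : nat) := count Sb (iota 0 N).

Lemma cntS N : cnt N.+1 = cnt N + Sb N.
Proof. by rewrite /cnt -addn1 iotaD count_cat /= addn0 add0n. Qed.

Lemma cnt_mono N K : N <= K -> cnt N <= cnt K.
Proof.
move=> /subnKC <-; elim: (K - N) => [|k IH]; first by rewrite addn0.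
by rewrite addnS cntS (leq_trans IH) // leq_addr.
Qed.

Lemma unbounded K : exists r, K <= v r.
Proof.
apply: NNPP => nb.
have h : forall r, v r < K.
  by move=> r; rewrite ltnNge; apply/negP => hr; apply: nb; exists r.
set s := map v (map (fun n : nat => (n%:R : RR)%R) (iota 0 K.+1)).
have us : uniq s.
  rewrite map_inj_uniq; last by move=> a b /vinj.
  rewrite map_inj_uniq ?iota_uniq //; move=> a b /eqP; rewrite Num.Theory.eqr_nat => /eqP //.
have sub : {subset s <= iota 0 K}.
  by move=> k /mapP [r _ ->]; rewrite mem_iota add0n h.
have := uniq_leq_size us sub.
by rewrite !size_map !size_iota ltnn.
Qed.

Lemma cnt_reach m : exists N, m <= cnt N.
Proof.
elim: m => [|m [N HN]]; first by exists 0.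
have [r hr] := unbounded N.
exists (v r).+1; rewrite cntS.
have -> : Sb (v r) = true by apply/sboolP; exists r.
by rewrite addn1 ltnS (leq_trans HN) // cnt_mono.
Qed.

Lemma cnt_surj m : exists r, cnt (v r) = m.
Proof.
have ex : exists N, m < cnt N by apply: cnt_reach.
pose N := ex_minn ex.
have [HN Hmin] : m < cnt N /\ forall K, m < cnt K -> N <= K.
  by rewrite /N; case: ex_minnP.
case EN: N => [|N'].
  by move: HN; rewrite EN.
have h1 : cnt N' <= m.
  rewrite leqNgt; apply/negP => /Hmin; rewrite EN ltnn //.
move: HN; rewrite EN cntS.
case ES: (Sb N') => h2.
  have [r hr] : exists r, v r = N' by apply/sboolP; exact: ES.
  exists r; rewrite hr; apply/eqP; rewrite eqn_leq h1 /=.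
  by rewrite addn1 ltnS in h2.
by move: h2; rewrite addn0 ltnNge h1.
Qed.

Lemma cnt_inj r1 r2 : cnt (v r1) = cnt (v r2) -> r1 = r2.
Proof.
move=> E; apply: vinj.
have lt : forall a b, v a < v b -> cnt (v a) < cnt (v b).
  move=> a b hab; apply: leq_trans (cnt_mono hab).
  rewrite cntS.
  have -> : Sb (v a) = true by apply/sboolP; exists a.
  by rewrite addn1.
case: (ltngtP (v r1) (v r2)) => // /lt; by rewrite E ltnn.
Qed.

Lemma no_inj_false : False.
Proof.
pose u := fun m => proj1_sig (constructive_indefinite_description _ (cnt_surj m)).
apply: (R_uncountable u).
exists (fun r => cnt (v r)); split.
  by move=> m; rewrite /u; case: constructive_indefinite_description.
move=> r; apply: cnt_inj.
by rewrite /u; case: constructive_indefinite_description.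
Qed.

End Count.

Lemma no_cover (Qn : nat -> RR -> Prop) :
  (forall r, exists n, Qn n r) ->
  (forall n (l : seq RR), uniq l -> (forall r, r \in l -> Qn n r) -> size l <= n) ->
  False.
Proof.
move=> cov bnd.
have HL : forall n, exists l : seq RR, forall r, Qn n r -> r \in l.
  by move=> n; apply: finite_fiber (bnd n).
pose L := fun n => proj1_sig (constructive_indefinite_description _ (HL n)).
have HLs : forall n r, Qn n r -> r \in L n.
  by move=> n r; rewrite /L; case: constructive_indefinite_description => l /= H /H.
pose nr := fun r => proj1_sig (constructive_indefinite_description _ (cov r)).
have Hnr : forall r, Qn (nr r) r.
  by move=> r; rewrite /nr; case: constructive_indefinite_description.
pose v := fun r => pickle (nr r, index r (L (nr r))).
apply: (@no_inj_false v) => r1 r2 /(pcan_inj pickleK) [E1 E2].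
have m1 := HLs _ _ (Hnr r1); have m2 := HLs _ _ (Hnr r2).
by rewrite -(nth_index r1 m1) -(nth_index r1 m2) E2 E1.
Qed.

Local Open Scope ring_scope.

Section Ops.
Variable d : nat.
Implicit Types (p q : F d) (e b c : Zd d) (P Q : F d -> F d) (j : 'I_d).

Lemma ev_jj (j : 'I_d) : ev j 0 j = 1.
Proof. by rewrite /ev mxE !eqxx. Qed.

Lemma subE (e b : Zd d) (j : 'I_d) : (e - b) 0 j = e 0 j - b 0 j.
Proof. by rewrite !mxE. Qed.

Lemma addE (e b : Zd d) (j : 'I_d) : (e + b) 0 j = e 0 j + b 0 j.
Proof. by rewrite !mxE. Qed.

Lemma sopE (j : 'I_d) p e : sop j p e = (e 0 j)%:~R * p e.
Proof.
rewrite /sop /opcomp /tmul /dpart subrK subE ev_jj subrK //.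
Qed.

Definition shift b : F d -> F d := fun p e => p (e - b).
Definition mulop (g : Zd d -> C) : F d -> F d := fun p e => g e * p e.
Definition comp_op b (g : Zd d -> C) : F d -> F d := fun p e => g (e - b) * p (e - b).

Lemma comp_opE b g : comp_op b g = opcomp (shift b) (mulop g).
Proof. by []. Qed.

Inductive IsPoly : (Zd d -> C) -> Prop :=
| Pc (l : C) : IsPoly (fun _ => l)
| Px (j : 'I_d) : IsPoly (fun x => (x 0 j)%:~R)
| Padd f g : IsPoly f -> IsPoly g -> IsPoly (fun x => f x + g x)
| Pmul f g : IsPoly f -> IsPoly g -> IsPoly (fun x => f x * g x).

Lemma IsPoly_ext f g : IsPoly f -> (forall x, f x = g x) -> IsPoly g.
Proof. by move=> Pf /functional_extensionality <-. Qed.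

Lemma IsPoly_shift f c : IsPoly f -> IsPoly (fun x => f (x + c)).
Proof.
elim=> [l|j|f1 g1 _ H1 _ H2|f1 g1 _ H1 _ H2].
- exact: Pc.
- apply: IsPoly_ext (Padd (Px j) (Pc (c 0 j)%:~R)) _ => x /=.
  by rewrite addE intrD.
- exact: Padd.
- exact: Pmul.
Qed.

Lemma W_ext P Q : WeylOp P -> (forall p e, P p e = Q p e) -> WeylOp Q.
Proof.
move=> WP H; have -> : Q = P; last by [].
apply: functional_extensionality => p; apply: functional_extensionality => e.
by rewrite H.
Qed.

Lemma W_sop j : WeylOp (sop j).
Proof. exact: W_comp (W_t j) (W_d j). Qed.

Lemma W_mulop g : IsPoly g -> WeylOp (mulop g).
Proof.
elim=> [l|j|f1 g1 _ H1 _ H2|f1 g1 _ H1 _ H2].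
- exact: W_scal.
- by apply: W_ext (W_sop j) _ => p e; rewrite sopE.
- by apply: W_ext (W_add H1 H2) _ => p e; rewrite /opadd /mulop mulrDl.
- by apply: W_ext (W_comp H1 H2) _ => p e; rewrite /opcomp /mulop mulrA.
Qed.

Lemma W_shift0 : WeylOp (shift 0).
Proof. by apply: W_ext (@W_scal d 1) _ => p e; rewrite /scal /shift mul1r subr0. Qed.

Lemma W_shiftD b1 b2 : WeylOp (shift b1) -> WeylOp (shift b2) -> WeylOp (shift (b1 + b2)).
Proof.
move=> H1 H2; apply: W_ext (W_comp H1 H2) _ => p e.
by rewrite /opcomp /shift opprD addrA.
Qed.

Lemma W_shift_ev j (k : int) : WeylOp (shift (ev j *~ k)).
Proof.
case: k => n.
- elim: n => [|n IH]; first exact: W_shift0.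
  have -> : ev j *~ (Posz n.+1) = ev j + ev j *~ (Posz n).
    by rewrite -pmulrn mulrS pmulrn.
  exact: W_shiftD (W_t j) IH.
- elim: n => [|n IH].
  + apply: W_ext (W_tinv j) _ => p e.
    by rewrite /shift /tinv NegzE mulrNz opprK.
  + have -> : ev j *~ (Negz n.+1) = - ev j + ev j *~ (Negz n).
      by rewrite !NegzE !mulrNz -!pmulrn mulrS opprD.
    apply: W_shiftD _ IH.
    by apply: W_ext (W_tinv j) _ => p e; rewrite /shift /tinv opprK.
Qed.

Lemma W_shift b : WeylOp (shift b).
Proof.
rewrite (row_sum_delta b).
elim/big_rec: _ => [|j v _ Hv]; first exact: W_shift0.
apply: W_shiftD Hv.
have -> : b 0 j *: 'e_j = ev j *~ (b 0 j).
  by rewrite -scaler_int intz.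
exact: W_shift_ev.
Qed.

Lemma W_comp_op b g : IsPoly g -> WeylOp (comp_op b g).
Proof. by move=> Pg; rewrite comp_opE; apply: W_comp (W_shift b) (W_mulop Pg). Qed.

End Ops.

Section NF.
Variable d : nat.
Implicit Types (p q : F d) (e b c : Zd d) (P Q : F d -> F d) (j : 'I_d).

Definition PF := {f : Zd d -> C | IsPoly f}.
Definition term := (Zd d * PF)%type.
Definition nfeval (L : seq term) p e :=
  \sum_(x <- L) sval x.2 (e - x.1) * p (e - x.1).

Definition cstPF (l : C) : PF := exist _ _ (Pc d l).
Definition mulsh (x y : term) : term :=
  (x.1 + y.1, exist _ (fun z => sval x.2 (z + y.1) * sval y.2 z)
     (Pmul (IsPoly_shift y.1 (svalP x.2)) (svalP y.2))).

Lemma nf P : WeylOp P -> exists L, forall p e, P p e = nfeval L p e.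
Proof.
elim=> [l|j|j|j|P1 Q1 _ [L1 H1] _ [L2 H2]|P1 Q1 _ [L1 H1] _ [L2 H2]].
- exists [:: (0, cstPF l)] => p e; by rewrite /nfeval big_seq1 /= subr0.
- exists [:: (ev j, cstPF 1)] => p e; by rewrite /nfeval big_seq1 /= mul1r.
- exists [:: (- ev j, cstPF 1)] => p e; by rewrite /nfeval big_seq1 /= mul1r opprK.
- exists [:: (- ev j, exist _ _ (Px j))] => p e.
  by rewrite /nfeval big_seq1 /= opprK addE ev_jj.
- exists (L1 ++ L2) => p e; by rewrite /opadd /nfeval big_cat /= H1 H2.
- exists [seq mulsh x y | x <- L1, y <- L2] => p e.
  rewrite /opcomp H1 /nfeval big_allpairs_dep /=.
  apply: eq_bigr => x _; rewrite H2 /nfeval mulr_sumr.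
  apply: eq_bigr => y _ /=.
  by rewrite opprD addrA subrK mulrA.
Qed.

End NF.

Section Comp.
Variable d : nat.
Variable A : seq (Zd d).
Implicit Types (p q : F d) (e b c : Zd d) (P Q : F d -> F d) (j : 'I_d) (L : seq (term d)).

Definition gL L b : Zd d -> C := fun x => \sum_(y <- L | y.1 == b) sval y.2 x.
Definition compL L b := comp_op b (gL L b).

Lemma gL_poly L b : IsPoly (gL L b).
Proof.
elim: L => [|y L IH].
  by apply: (IsPoly_ext (Pc d 0)) => x; rewrite /gL big_nil.
case Hy: (y.1 == b).
  apply: IsPoly_ext (Padd (svalP y.2) IH) _ => x.
  by rewrite /gL big_cons Hy.
by apply: IsPoly_ext IH _ => x; rewrite /gL big_cons Hy.
Qed.

Lemma sum_pred1_uniq (T : eqType) (r : seq T) x (G : C) :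
  uniq r -> x \in r -> \sum_(b <- r | b == x) G = G.
Proof.
move=> u xr; rewrite (big_rem x) //= eqxx big1_seq ?addr0 //.
move=> y /andP[/eqP -> ]; rewrite rem_filter // mem_filter /=.
by rewrite eqxx.
Qed.

Lemma eq_bigr_In (T : Type) (L : seq T) (F1 F2 : T -> C) :
  (forall y, List.In y L -> F1 y = F2 y) ->
  \sum_(y <- L) F1 y = \sum_(y <- L) F2 y.
Proof.
elim: L => [|y L IH] H; first by rewrite !big_nil.
rewrite !big_cons H /=; last by left.
by rewrite IH // => z Hz; apply: H; right.
Qed.

Lemma In_mem (T : eqType) (x : T) s : List.In x s -> x \in s.
Proof.
elim: s => [|y s IH] //= [->|H]; rewrite inE ?eqxx //.
by rewrite IH ?orbT.
Qed.

Lemma nf_split L p e :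
  nfeval L p e = \sum_(b <- undup (map fst L)) compL L b p e.
Proof.
rewrite /nfeval.
transitivity (\sum_(y <- L) \sum_(b <- undup (map fst L))
   (if b == y.1 then sval y.2 (e - y.1) * p (e - y.1) else 0)).
  apply: eq_bigr_In => y yL.
  rewrite -big_mkcond /=.
  rewrite sum_pred1_uniq //; first exact: undup_uniq.
  by rewrite mem_undup; apply: In_mem; apply: List.in_map.
rewrite exchange_big /=; apply: eq_bigr => b _.
rewrite /compL /comp_op /gL mulr_suml.
rewrite [in RHS]big_mkcond /=; apply: eq_bigr => y _.
by rewrite eq_sym; case: eqP => // ->.
Qed.

Definition delta e0 : F d := fun c => if c == e0 then 1 else 0.

Lemma nf_delta L e0 e : nfeval L (delta e0) e = gL L (e - e0) e0.
Proof.
rewrite /nfeval /gL /= [RHS]big_mkcond /=; apply: eq_bigr => y _.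
rewrite /delta.
have -> : (e - y.1 == e0) = (y.1 == e - e0).
  apply/eqP/eqP => [<-|->]; first by rewrite opprB addrC subrK.
  by rewrite opprB addrC subrK.
case: eqP => [->|_]; last by rewrite mulr0.
by rewrite opprB addrC subrK mulr1.
Qed.

Lemma inRA_delta e0 : inNA A e0 -> inRA A (delta e0).
Proof.
move=> H; split.
  by exists [:: e0] => c; rewrite /delta mem_seq1; case: (c == e0); rewrite ?eqxx.
move=> c; rewrite /delta; case: (eqVneq c e0) => [-> //|ne].
by rewrite eqxx.
Qed.

Lemma mul_neq0_r (x y : C) : x * y != 0 -> y != 0.
Proof. by apply: contra => /eqP ->; rewrite mulr0. Qed.
Lemma mul_neq0_l (x y : C) : x * y != 0 -> x != 0.
Proof. by apply: contra => /eqP ->; rewrite mul0r. Qed.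

Lemma comp_inD P L b : inD A P -> (forall p e, P p e = nfeval L p e) ->
  inD A (compL L b).
Proof.
move=> [WP HP] HL; split; first exact: W_comp_op (gL_poly L b).
move=> p [[s Hs] Hna]; split.
  exists (map (fun x => x + b) s) => e /= He.
  have /Hs Hin := mul_neq0_r He.
  by apply/mapP; exists (e - b) => //; rewrite subrK.
move=> e /= He.
have Hp := mul_neq0_r He.
have Hg := mul_neq0_l He.
have /HP [_ HR] := inRA_delta (Hna _ Hp).
apply: HR; rewrite HL nf_delta.
by rewrite opprB addrC subrK.
Qed.

Lemma comp_deg b g : inD A (comp_op b g) -> inDdeg A b (comp_op b g).
Proof.
move=> H; split => // j p e.
rewrite !sopE /comp_op sopE subE intrB.
ring.
Qed.

End Comp.

Section DLemmas.
Variable d : nat.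
Variable A : seq (Zd d).
Implicit Types (p q : F d) (e b c : Zd d) (P Q : F d -> F d) (j : 'I_d) (L : seq (term d)) (g : Zd d -> C) (l : C).

Lemma op_ext P Q : (forall p e, P p e = Q p e) -> P = Q.
Proof.
move=> H; apply: functional_extensionality => p.
by apply: functional_extensionality => e.
Qed.

Lemma inRA_add p q : inRA A p -> inRA A q -> inRA A (fun c => p c + q c).
Proof.
move=> [[s1 H1] N1] [[s2 H2] N2]; split.
  exists (s1 ++ s2) => c Hc; rewrite mem_cat.
  case: (eqVneq (p c) 0) => [E|/H1 -> //].
  by rewrite H2 ?orbT //; move: Hc; rewrite E add0r.
move=> c Hc; case: (eqVneq (p c) 0) => [E|/N1 //].
by apply: N2; move: Hc; rewrite E add0r.
Qed.

Lemma inRA_mul (g : Zd d -> C) p : inRA A p -> inRA A (fun c => g c * p c).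
Proof.
move=> [[s H] N]; split; first by exists s => c /mul_neq0_r /H.
by move=> c /mul_neq0_r /N.
Qed.

Lemma inD_mulop g : IsPoly g -> inD A (mulop g).
Proof. by move=> Pg; split; [exact: W_mulop | move=> p /(inRA_mul g)]. Qed.

Lemma inD_scal l : inD A (scal l).
Proof. split; [exact: W_scal | move=> p /(inRA_mul (fun _ => l)) //]. Qed.

Lemma sop_mulop j : sop j = mulop (fun x => (x 0 j)%:~R).
Proof. by apply: op_ext => p e; rewrite sopE. Qed.

Lemma inD_sop j : inD A (sop j).
Proof. by rewrite sop_mulop; apply: inD_mulop; apply: Px. Qed.

Lemma inD_add P Q : inD A P -> inD A Q -> inD A (opadd P Q).
Proof.
move=> [W1 H1] [W2 H2]; split; first exact: W_add.
by move=> p Hp; apply: inRA_add; [apply: H1 | apply: H2].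
Qed.

Lemma inD_comp P Q : inD A P -> inD A Q -> inD A (opcomp P Q).
Proof.
move=> [W1 H1] [W2 H2]; split; first exact: W_comp.
by move=> p Hp; apply: H1; apply: H2.
Qed.

Lemma mulop_comp0 g : mulop g = comp_op 0 g.
Proof. by apply: op_ext => p e; rewrite /mulop /comp_op subr0. Qed.

Lemma inDdeg_mulop g : IsPoly g -> inDdeg A 0 (mulop g).
Proof. by move=> Pg; rewrite mulop_comp0; apply: comp_deg; rewrite -mulop_comp0; apply: inD_mulop. Qed.

Lemma scal_mulop l : scal l = mulop (fun _ : Zd d => l).
Proof. by []. Qed.

Lemma inDdeg_scal l : inDdeg A 0 (scal l).
Proof. by rewrite scal_mulop; apply: inDdeg_mulop; apply: Pc. Qed.

Lemma inDdeg_sop j : inDdeg A 0 (sop j).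
Proof. by rewrite sop_mulop; apply: inDdeg_mulop; apply: Px. Qed.

Lemma W_lin P l p : WeylOp P -> P (scal l p) = scal l (P p).
Proof.
move=> WP; elim: WP p => [l'|j|j|j|P1 Q1 _ H1 _ H2|P1 Q1 _ H1 _ H2] p;
  apply: functional_extensionality => e //; rewrite /scal /=.
- by rewrite mulrCA.
- by rewrite /dpart mulrCA.
- by rewrite /opadd H1 H2 /scal mulrDr.
- by rewrite /opcomp H2 H1.
Qed.

Fixpoint sumop (l : seq (Zd d)) (G : Zd d -> F d -> F d) : F d -> F d :=
  match l with
  | [::] => scal 0
  | b :: l' => opadd (G b) (sumop l' G)
  end.

Lemma sumopE (l : seq (Zd d)) (G : Zd d -> F d -> F d) p e : sumop l G p e = \sum_(b <- l) G b p e.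
Proof.
elim: l => [|b l IH] /=; first by rewrite big_nil /scal mul0r.
by rewrite big_cons /opadd IH.
Qed.

Lemma inD_sumop (l : seq (Zd d)) (G : Zd d -> F d -> F d) : (forall b, inD A (G b)) -> inD A (sumop l G).
Proof.
move=> H; elim: l => [|b l IH] /=; first exact: inD_scal.
exact: inD_add.
Qed.

Lemma gL_notin L b x : b \notin map fst L -> gL L b x = 0.
Proof.
rewrite /gL; elim: L => [|y L IH] /=; first by rewrite big_nil.
rewrite inE negb_or => /andP[ne /IH {}IH].
by rewrite big_cons eq_sym (negbTE ne).
Qed.

Lemma compL_notin L b : b \notin map fst L -> compL L b = scal 0.
Proof.
move=> H; apply: op_ext => p e.
by rewrite /compL /comp_op gL_notin // /scal !mul0r.
Qed.

End DLemmas.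

Section Mod.
Variables (d : nat) (A : seq (Zd d)) (M : zmodType) (act : (F d -> F d) -> M -> M)
  (grade : Zd d -> M -> Prop).
Hypothesis HD : isDModule A act.
Hypothesis HG : isGraded A act grade.
Implicit Types (p q : F d) (e b c : Zd d) (P Q : F d -> F d) (j : 'I_d) (L : seq (term d))
  (g : Zd d -> C) (l : C) (x y z : M).

Lemma actD P x y : inD A P -> act P (x + y) = act P x + act P y.
Proof. by case: HD => H _ _ _; apply: H. Qed.
Lemma act_add P Q x : inD A P -> inD A Q -> act (opadd P Q) x = act P x + act Q x.
Proof. by case: HD => _ H _ _; apply: H. Qed.
Lemma act_comp P Q x : inD A P -> inD A Q -> act (opcomp P Q) x = act P (act Q x).
Proof. by case: HD => _ _ H _; apply: H. Qed.
Lemma act_id x : act id x = x.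
Proof. by case: HD => _ _ _ H; apply: H. Qed.

Lemma act0 P : inD A P -> act P 0 = 0.
Proof.
move=> H; have h := actD 0 0 H; rewrite addr0 in h.
by apply: (addrI (act P 0)); rewrite addr0 -h.
Qed.

Lemma actN P x : inD A P -> act P (- x) = - act P x.
Proof.
move=> H; apply: (addrI (act P x)); rewrite -actD // !subrr act0 //.
Qed.

Lemma actB P x y : inD A P -> act P (x - y) = act P x - act P y.
Proof. by move=> H; rewrite actD // actN. Qed.

Lemma act_sum P (I : Type) (r : seq I) (G : I -> M) : inD A P ->
  act P (\sum_(i <- r) G i) = \sum_(i <- r) act P (G i).
Proof.
move=> H; apply: (big_morph (act P)); [by move=> u v; apply: actD | exact: act0].
Qed.

Lemma act_scal0 x : act (scal 0) x = 0.
Proof.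
have h := act_add x (inD_scal A 0) (inD_scal A 0).
have E : opadd (scal 0) (scal 0) = scal (d:=d) 0.
  by apply: op_ext => p e; rewrite /opadd /scal !mul0r addr0.
rewrite E in h.
by apply: (addrI (act (scal 0) x)); rewrite addr0 -h.
Qed.

Definition smul l x := act (scal l) x.

Lemma sm_addl l1 l2 x : smul (l1 + l2) x = smul l1 x + smul l2 x.
Proof.
rewrite /smul -act_add; try exact: inD_scal.
by congr act; apply: op_ext => p e; rewrite /opadd /scal mulrDl.
Qed.

Lemma sm_mul l1 l2 x : smul l1 (smul l2 x) = smul (l1 * l2) x.
Proof.
rewrite /smul -act_comp; try exact: inD_scal.
by congr act; apply: op_ext => p e; rewrite /opcomp /scal mulrA.
Qed.

Lemma sm1 x : smul 1 x = x.
Proof.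
rewrite /smul -[RHS]act_id; congr act.
by apply: op_ext => p e; rewrite /scal mul1r.
Qed.

Lemma sm0 x : smul 0 x = 0.
Proof. exact: act_scal0. Qed.

Lemma smD l x y : smul l (x + y) = smul l x + smul l y.
Proof. by apply: actD; apply: inD_scal. Qed.

Lemma smr0 l : smul l 0 = 0.
Proof. by apply: act0; apply: inD_scal. Qed.

Lemma smN l x : smul l (- x) = - smul l x.
Proof. by apply: actN; apply: inD_scal. Qed.

Lemma smB l x y : smul l (x - y) = smul l x - smul l y.
Proof. by apply: actB; apply: inD_scal. Qed.

Lemma sm_sum l (I : Type) (r : seq I) (G : I -> M) :
  smul l (\sum_(i <- r) G i) = \sum_(i <- r) smul l (G i).
Proof. by apply: act_sum; apply: inD_scal. Qed.

Lemma sm_suml (I : Type) (r : seq I) (G : I -> C) x :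
  smul (\sum_(i <- r) G i) x = \sum_(i <- r) smul (G i) x.
Proof.
apply: (big_morph (fun l => smul l x)); [by move=> u v; apply: sm_addl | exact: sm0].
Qed.

Lemma smul_comm P l x : inD A P -> act P (smul l x) = smul l (act P x).
Proof.
move=> H; rewrite /smul -!act_comp //; try exact: inD_scal.
congr act; apply: op_ext => p e; rewrite /opcomp W_lin //.
by case: H.
Qed.

Lemma sm_inj l x : l != 0 -> smul l x = 0 -> x = 0.
Proof.
move=> nz h; rewrite -[x]sm1 -(mulVf nz) -sm_mul h smr0 //.
Qed.

Lemma gr0 a : grade a 0.
Proof. by case: HG. Qed.
Lemma grB a x y : grade a x -> grade a y -> grade a (x - y).
Proof. by case: HG => _ H _ _ _; apply: H. Qed.
Lemma grN a x : grade a x -> grade a (- x).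
Proof. by move=> h; rewrite -sub0r; apply: grB => //; apply: gr0. Qed.
Lemma grD a x y : grade a x -> grade a y -> grade a (x + y).
Proof. by move=> h1 h2; rewrite -[y]opprK; apply: grB => //; apply: grN. Qed.
Lemma gr_act b a P x : inDdeg A b P -> grade a x -> grade (a + b) (act P x).
Proof. by case: HG => _ _ _ _ H; apply: H. Qed.
Lemma gr_act0 a P x : inDdeg A 0 P -> grade a x -> grade a (act P x).
Proof. by move=> H1 H2; have := gr_act H1 H2; rewrite addr0. Qed.
Lemma gr_sm a l x : grade a x -> grade a (smul l x).
Proof. by apply: gr_act0; apply: inDdeg_scal. Qed.
Lemma gr_sum a (I : Type) (r : seq I) (G : I -> M) :
  (forall i, grade a (G i)) -> grade a (\sum_(i <- r) G i).
Proof.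
move=> H; elim: r => [|i r IH]; first by rewrite big_nil; apply: gr0.
by rewrite big_cons; apply: grD.
Qed.

Lemma sum_sub (s U : seq (Zd d)) (G : Zd d -> M) :
  uniq s -> uniq U -> {subset s <= U} -> (forall a, a \notin s -> G a = 0) ->
  \sum_(a <- U) G a = \sum_(a <- s) G a.
Proof.
move=> us uU sub z.
transitivity (\sum_(a <- U | a \in s) G a).
  rewrite [RHS]big_mkcond; apply: eq_bigr => a _.
  by case: ifP => // /negbT /z.
rewrite -big_filter; apply: perm_big; apply: uniq_perm => //.
  exact: filter_uniq.
move=> a; rewrite mem_filter; apply/andP/idP => [[]//|h]; split => //.
exact: sub.
Qed.

Lemma decomp_unique s G s' G' : uniq s -> uniq s' ->
  (forall a, grade a (G a)) -> (forall a, grade a (G' a)) ->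
  (forall a, a \notin s -> G a = 0) -> (forall a, a \notin s' -> G' a = 0) ->
  \sum_(a <- s) G a = \sum_(a <- s') G' a -> forall a, G a = G' a.
Proof.
move=> us us' g g' z z' E a.
set U := undup (s ++ s').
have uU : uniq U by apply: undup_uniq.
have E1 : \sum_(a <- U) G a = \sum_(a <- s) G a.
  by apply: sum_sub => // b bs; rewrite mem_undup mem_cat bs.
have E2 : \sum_(a <- U) G' a = \sum_(a <- s') G' a.
  by apply: sum_sub => // b bs; rewrite mem_undup mem_cat bs orbT.
case: HG => _ _ _ H4 _.
have := H4 U (fun a => G a - G' a) uU.
have Hz : \sum_(a <- U) (G a - G' a) = 0 by rewrite sumrB E1 E2 E subrr.
move=> /(_ (fun b _ => grB (g b) (g' b)) Hz) h.
case aU: (a \in U); first by apply/eqP; rewrite -subr_eq0; apply/eqP; apply: h.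
move: aU; rewrite mem_undup mem_cat => /negbT; rewrite negb_or => /andP[n1 n2].
by rewrite z // z'.
Qed.

Lemma act_sumop (l : seq (Zd d)) G x : (forall b, inD A (G b)) ->
  act (sumop l G) x = \sum_(b <- l) act (G b) x.
Proof.
move=> H; elim: l => [|b l IH] /=; first by rewrite big_nil act_scal0.
by rewrite act_add ?IH ?big_cons //; apply: inD_sumop.
Qed.

Lemma extract P x a0 s G : inD A P -> grade a0 x -> uniq s ->
  (forall a, a \in s -> grade a (G a)) -> act P x = \sum_(a <- s) G a ->
  forall a, a \in s -> exists g, [/\ IsPoly g, inD A (comp_op (a - a0) g) &
     G a = act (comp_op (a - a0) g) x].
Proof.
move=> HP gx us gs E a as_.
have [L HL] := nf (proj1 HP).
have HC : forall b, inD A (compL L b) by move=> b; apply: comp_inD HP HL.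
set U := undup (map fst L).
have EP : P = sumop U (compL L).
  by apply: op_ext => p e; rewrite HL nf_split sumopE.
set h := fun b : Zd d => b + a0.
set s0 := map h U.
set G0 := fun a => act (compL L (a - a0)) x.
set G' := fun a => if a \in s then G a else 0.
have us0 : uniq s0 by rewrite map_inj_uniq ?undup_uniq // => u v; apply: addIr.
have E0 : \sum_(a <- s0) G0 a = \sum_(a <- s) G' a.
  have -> : \sum_(a <- s) G' a = \sum_(a <- s) G a.
    rewrite big_seq [RHS]big_seq; apply: eq_bigr => i i1.
    by rewrite /G' i1.
  rewrite -E EP act_sumop // big_map.
  by apply: eq_bigr => b _; rewrite /G0 /h addrK.
have gG0 : forall a, grade a (G0 a).
  move=> b; have := gr_act (comp_deg (HC (b - a0))) gx.
  by rewrite addrC subrK.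
have gG' : forall a, grade a (G' a).
  by move=> b; rewrite /G'; case: ifP => [/gs //|_]; apply: gr0.
have zG0 : forall a, a \notin s0 -> G0 a = 0.
  move=> b nb; rewrite /G0 compL_notin ?act_scal0 //.
  apply: contra nb => hb; apply/mapP; exists (b - a0); last by rewrite /h subrK.
  by rewrite mem_undup.
have zG' : forall a, a \notin s -> G' a = 0 by move=> b /negbTE nb; rewrite /G' nb.
have := decomp_unique us0 us gG0 gG' zG0 zG' E0 a.
rewrite /G' as_ /G0 => <-.
exists (gL L (a - a0)); split; [exact: (gL_poly L (a - a0)) | exact: HC | by []].
Qed.

End Mod.

Section Simple.
Variables (d : nat) (A : seq (Zd d)) (M : zmodType) (act : (F d -> F d) -> M -> M)
  (grade : Zd d -> M -> Prop).
Hypothesis HD : isDModule A act.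
Hypothesis HG : isGraded A act grade.
Hypothesis HS : gradedSimple A act grade.
Implicit Types (p q : F d) (e b c : Zd d) (P Q : F d -> F d) (j : 'I_d) (L : seq (term d))
  (g : Zd d -> C) (l : C) (x y z : M).

Local Notation smul := (smul act).

Lemma Nx_full x a0 : grade a0 x -> x != 0 -> forall y, exists P, inD A P /\ act P x = y.
Proof.
move=> gx nx.
set N := fun y => exists P, inD A P /\ act P x = y.
have GS : isGradedSubmodule A act grade N.
  split.
    split.
    - by exists (scal 0); split; [exact: inD_scal | exact: (act_scal0 HD)].
    - move=> y1 y2 [P1 [H1 <-]] [P2 [H2 <-]].
      by exists (opadd P1 P2); split; [exact: inD_add | exact: (act_add HD)].
    - move=> Q y1 HQ [P1 [H1 <-]].
      by exists (opcomp Q P1); split; [exact: inD_comp | exact: (act_comp HD)].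
  move=> y s G [P [HP <-]] us gs E a as_.
  have [g [_ Hg ->]] := extract HD HG HP gx us gs E as_.
  by exists (comp_op (a - a0) g).
case: HS => _ /(_ N GS) [H|H].
  have : N x by exists (scal 1); split; [exact: inD_scal | exact: (sm1 HD)].
  by move/H => ex; rewrite ex eqxx in nx.
exact: H.
Qed.

Lemma gen x a0 y a1 : grade a0 x -> x != 0 -> grade a1 y ->
  exists g, [/\ IsPoly g, inD A (comp_op (a1 - a0) g) & y = act (comp_op (a1 - a0) g) x].
Proof.
move=> gx nx gy.
have [P [HP E]] := Nx_full gx nx y.
have E' : act P x = \sum_(a <- [:: a1]) (fun _ => y) a by rewrite big_seq1.
have gs : forall a, a \in [:: a1] -> grade a ((fun _ => y) a).
  by move=> a; rewrite mem_seq1 => /eqP ->.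
have := extract HD HG HP gx (erefl true : uniq [:: a1]) gs E' (mem_head a1 [::]).
by [].
Qed.

Lemma weight x a0 (mu : 'I_d -> C) : grade a0 x -> x != 0 ->
  (forall j, act (sop j) x = smul (mu j) x) ->
  forall y a1 j, grade a1 y -> act (sop j) y = smul (mu j + ((a1 - a0) 0 j)%:~R) y.
Proof.
move=> gx nx hx y a1 j gy.
have [g [_ Hg ->]] := gen gx nx gy.
set Q := comp_op (a1 - a0) g.
have [_ Hdeg] := comp_deg Hg.
have E : opcomp (sop j) Q = opadd (opcomp Q (sop j)) (opcomp (scal ((a1 - a0) 0 j)%:~R) Q).
  apply: op_ext => p e; rewrite /opadd /opcomp /scal -Hdeg.
  by rewrite addrC subrK.
rewrite -(act_comp HD) //; last exact: inD_sop.
have I1 : inD A (opcomp Q (sop j)) by apply: inD_comp => //; exact: inD_sop.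
have I2 : inD A (opcomp (scal ((a1 - a0) 0 j)%:~R) Q) by apply: inD_comp => //; exact: inD_scal.
rewrite E (act_add HD _ I1 I2).
rewrite (act_comp HD (P:=Q) (Q:=sop j)) //; last exact: inD_sop.
rewrite (act_comp HD (P:=scal _) (Q:=Q)) //; last exact: inD_scal.
by rewrite hx (smul_comm HD) // -/(smul _ _) (sm_addl HD).
Qed.

Lemma smN1 z : smul (-1) z = - z.
Proof.
apply: (addrI z); rewrite subrr -{1}[z](sm1 HD) -(sm_addl HD) //.
by rewrite subrr (sm0 HD).
Qed.

Lemma sm_oppl l z : smul (- l) z = - smul l z.
Proof.
by apply: (addrI (smul l z)); rewrite -(sm_addl HD) !subrr (sm0 HD).
Qed.

Lemma separate (N : M -> Prop) (w : Zd d -> 'I_d -> C) :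
  isDSubmodule A act N ->
  (forall a a' j, w a j - w a' j = (a 0 j - a' 0 j)%:~R) ->
  forall n (s : seq (Zd d)) (G : Zd d -> M), size s = n -> uniq s ->
  (forall a, a \in s -> forall j, act (sop j) (G a) = smul (w a j) (G a)) ->
  N (\sum_(a <- s) G a) -> forall a, a \in s -> N (G a).
Proof.
move=> [N0 ND NA] hw; elim=> [|n IH] s G sz us eig Ns a as_.
  by move/size0nil: sz => E; rewrite E in as_.
have NB : forall u v, N u -> N v -> N (u - v).
  by move=> u v Nu Nv; apply: ND => //; rewrite -smN1; apply: NA => //; exact: inD_scal.
case Er: (rem a s) => [|a' r].
  by move: Ns; rewrite (big_rem a) //= Er big_nil addr0.
have a'r : a' \in rem a s by rewrite Er mem_head.
move: (a'r); rewrite mem_rem_uniq // => /andP[na' a's].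
have [j hj] : exists j, a' 0 j != a 0 j.
  case: (boolP [exists j, a' 0 j != a 0 j]) => [/existsP [j hj]|/existsPn h].
    by exists j.
  exfalso; move/negP: na'; apply; apply/eqP/rowP => i.
  by have := h i; rewrite negbK => /eqP.
set G' := fun b => smul (w b j - w a' j) (G b).
have Ns' : N (\sum_(b <- rem a' s) G' b).
  have -> : \sum_(b <- rem a' s) G' b = \sum_(b <- s) G' b.
    rewrite [RHS](big_rem a') //=.
    have -> : G' a' = 0 by rewrite /G' subrr (sm0 HD).
    by rewrite add0r.
  have -> : \sum_(b <- s) G' b = act (sop j) (\sum_(b <- s) G b) - smul (w a' j) (\sum_(b <- s) G b).
    rewrite (act_sum HD) //; last exact: inD_sop.
    rewrite (sm_sum HD) // -sumrB big_seq [RHS]big_seq; apply: eq_bigr => b bs.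
    by rewrite /G' eig // (sm_addl HD) sm_oppl.
  apply: NB => //; [apply: NA => //; exact: inD_sop | apply: NA => //; exact: inD_scal].
have ar : a \in rem a' s by rewrite mem_rem_uniq // inE as_ andbT; apply: contra na' => /eqP ->.
have sz' : size (rem a' s) = n by rewrite size_rem // sz.
have eig' : forall b, b \in rem a' s -> forall j0, act (sop j0) (G' b) = smul (w b j0) (G' b).
  move=> b; rewrite mem_rem_uniq // => /andP[_ bs] j0.
  rewrite /G' (smul_comm HD) //; last exact: inD_sop.
  by rewrite eig // !(sm_mul HD) // mulrC.
have := IH (rem a' s) G' sz' (rem_uniq _ us) eig' Ns' a ar.
rewrite /G' => h.
have nz : w a j - w a' j != 0.
  by rewrite hw intr_eq0 subr_eq0 eq_sym.
have -> : G a = smul (w a j - w a' j)^-1 (smul (w a j - w a' j) (G a)).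
  by rewrite (sm_mul HD) // mulVf // (sm1 HD).
by apply: NA => //; exact: inD_scal.
Qed.

End Simple.

Section Span.
Variables (d : nat) (A : seq (Zd d)) (M : zmodType) (act : (F d -> F d) -> M -> M).
Hypothesis HD : isDModule A act.
Variable x : M.
Implicit Types (p q : F d) (e b c : Zd d) (P Q : F d -> F d) (j : 'I_d)
  (g : Zd d -> C) (l : C) (y z : M).

Local Notation smul := (smul act).

Fixpoint wordop (k : seq 'I_d) : F d -> F d :=
  match k with
  | [::] => scal 1
  | j :: k' => opcomp (sop j) (wordop k')
  end.

Lemma inD_wordop k : inD A (wordop k).
Proof.
elim: k => [|j k IH] /=; first exact: inD_scal.
by apply: inD_comp => //; exact: inD_sop.
Qed.

Definition wv (n : nat) : M :=
  match @unpickle (seq 'I_d) n with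
  | Some k => act (wordop k) x
  | None => 0
  end.

Definition spanx y := exists n (c : nat -> C), y = \sum_(i < n) smul (c i) (wv i).

Lemma span_pad (n m : nat) (c : nat -> C) : (n <= m)%N ->
  \sum_(i < n) smul (c i) (wv i) = \sum_(i < m) smul (if (i < n)%N then c i else 0) (wv i).
Proof.
move=> nm; rewrite (big_ord_widen m (fun i => smul (c i) (wv i)) nm) big_mkcond /=.
apply: eq_bigr => i _; case: ifP => _ //; by rewrite (sm0 HD).
Qed.

Lemma span0 : spanx 0.
Proof. by exists 0%N, (fun _ => 0); rewrite big_ord0. Qed.

Lemma span_add y z : spanx y -> spanx z -> spanx (y + z).
Proof.
move=> [n1 [c1 ->]] [n2 [c2 ->]].
exists (maxn n1 n2), (fun i => (if (i < n1)%N then c1 i else 0) + (if (i < n2)%N then c2 i else 0)).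
rewrite (span_pad c1 (leq_maxl n1 n2)) (span_pad c2 (leq_maxr n1 n2)) -big_split /=.
by apply: eq_bigr => i _; rewrite (sm_addl HD).
Qed.

Lemma span_sm l y : spanx y -> spanx (smul l y).
Proof.
move=> [n [c ->]]; exists n, (fun i => l * c i).
rewrite (sm_sum HD); apply: eq_bigr => i _; by rewrite (sm_mul HD).
Qed.

Lemma span_sum (I : Type) (r : seq I) (G : I -> M) :
  (forall i, spanx (G i)) -> spanx (\sum_(i <- r) G i).
Proof.
move=> H; elim: r => [|i r IH]; first by rewrite big_nil; exact: span0.
by rewrite big_cons; apply: span_add.
Qed.

Lemma span_wv n : spanx (wv n).
Proof.
exists n.+1, (fun i => if i == n then 1 else 0).
rewrite big_ord_recr /= eqxx (sm1 HD) big1 ?add0r // => i _.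
by rewrite (ltn_eqF (ltn_ord i)) (sm0 HD).
Qed.

Lemma span_sop j y : spanx y -> spanx (act (sop j) y).
Proof.
move=> [n [c ->]]; rewrite (act_sum HD); last exact: inD_sop.
apply: span_sum => i; rewrite (smul_comm HD); last exact: inD_sop.
apply: span_sm; rewrite /wv.
case E: (unpickle i) => [k|]; last by rewrite (act0 HD); [exact: span0 | exact: inD_sop].
rewrite -(act_comp HD) ?inD_sop ?inD_wordop //; try exact: inD_sop; try exact: inD_wordop.
have := span_wv (pickle (j :: k)); rewrite /wv pickleK /=.
by [].
Qed.

Lemma span_mulop g : IsPoly g -> forall y, spanx y -> spanx (act (mulop g) y).
Proof.
elim=> [l'|j|f1 g1 P1 H1 P2 H2|f1 g1 P1 H1 P2 H2] y sy.
- by rewrite -scal_mulop; apply: span_sm.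
- by rewrite -sop_mulop; apply: span_sop.
- have -> : mulop (fun t : Zd d => f1 t + g1 t) = opadd (mulop f1) (mulop g1).
    by apply: op_ext => p e; rewrite /opadd /mulop mulrDl.
  rewrite (act_add HD); try exact: inD_mulop.
  by apply: span_add; [apply: H1 | apply: H2].
- have -> : mulop (fun t : Zd d => f1 t * g1 t) = opcomp (mulop f1) (mulop g1).
    by apply: op_ext => p e; rewrite /opcomp /mulop mulrA.
  rewrite (act_comp HD); try exact: inD_mulop.
  by apply: H1; apply: H2.
Qed.

Lemma span_x : spanx x.
Proof.
have := span_wv (pickle ([::] : seq 'I_d)); rewrite /wv pickleK /=.
by rewrite -/(smul 1 x) (sm1 HD).
Qed.

End Span.

Section Ev.
Variables (d : nat) (A : seq (Zd d)) (M : zmodType) (act : (F d -> F d) -> M -> M)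
  (grade : Zd d -> M -> Prop).
Hypothesis HD : isDModule A act.
Hypothesis HG : isGraded A act grade.
Variable j : 'I_d.
Implicit Types (l : C) (y z : M) (p q : {poly C}).

Local Notation smul := (smul act).
Local Notation T := (act (sop j)).

Lemma TD y z : T (y + z) = T y + T z.
Proof. by apply: (actD HD); exact: inD_sop. Qed.
Lemma T0 : T 0 = 0.
Proof. by apply: (act0 HD); exact: inD_sop. Qed.
Lemma Tsm l y : T (smul l y) = smul l (T y).
Proof. by apply: (smul_comm HD); exact: inD_sop. Qed.
Lemma Tsum (I : Type) (r : seq I) (G : I -> M) : T (\sum_(i <- r) G i) = \sum_(i <- r) T (G i).
Proof. by apply: (act_sum HD); exact: inD_sop. Qed.

Lemma iterD n y z : iter n T (y + z) = iter n T y + iter n T z.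
Proof. by elim: n => //= n ->; rewrite TD. Qed.
Lemma iter0 n : iter n T 0 = 0.
Proof. by elim: n => //= n ->; rewrite T0. Qed.
Lemma itersm n l y : iter n T (smul l y) = smul l (iter n T y).
Proof. by elim: n => //= n ->; rewrite Tsm. Qed.
Lemma itergr a n y : grade a y -> grade a (iter n T y).
Proof.
move=> gy; elim: n => //= n IH.
by apply: (gr_act0 HG) => //; exact: inDdeg_sop.
Qed.

Definition evn n p y := \sum_(i < n) smul p`_i (iter i T y).
Definition ev p y := evn (size p) p y.

Lemma evn_ge n p y : (size p <= n)%N -> evn n p y = ev p y.
Proof.
move=> h; rewrite /ev /evn (big_ord_widen n (fun i => smul p`_i (iter i T y)) h).
rewrite [RHS]big_mkcond /=; apply: eq_bigr => i _; case: ifP => // /negbT.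
by rewrite -leqNgt => hi; rewrite nth_default // (sm0 HD).
Qed.

Lemma ev_add p q y : ev (p + q) y = ev p y + ev q y.
Proof.
set n := maxn (size p) (size q).
rewrite -(evn_ge y (leq_maxl (size p) (size q))) -(evn_ge y (leq_maxr (size p) (size q))).
rewrite -(@evn_ge n) ?size_add // /evn -big_split /=.
by apply: eq_bigr => i _; rewrite coefD (sm_addl HD).
Qed.

Lemma ev0 y : ev 0 y = 0.
Proof. by rewrite /ev /evn size_poly0 big_ord0. Qed.

Lemma ev_scale l p y : ev (l *: p) y = smul l (ev p y).
Proof.
rewrite -(@evn_ge (size p)); last exact: size_scale_leq.
rewrite /ev /evn (sm_sum HD l).
by apply: eq_bigr => i _; rewrite coefZ (sm_mul HD).
Qed.

Lemma ev_C l y : ev l%:P y = smul l y.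
Proof.
rewrite -(@evn_ge 1) ?size_polyC_leq1 // /evn big_ord_recl big_ord0 addr0 /=.
by rewrite coefC.
Qed.

Lemma ev_Xmul p y : ev ('X * p) y = T (ev p y).
Proof.
have hs : (size ('X * p)%R <= (size p).+1)%N.
  by apply: leq_trans (size_mul_leq _ _) _; rewrite size_polyX.
rewrite -(evn_ge y hs) /evn big_ord_recl /= coefXM eqxx (sm0 HD) add0r.
rewrite /ev /evn Tsum; apply: eq_bigr => i _.
by rewrite coefXM /= Tsm.
Qed.

Lemma ev_T p y : T (ev p y) = ev p (T y).
Proof.
rewrite /ev /evn Tsum; apply: eq_bigr => i _.
by rewrite Tsm -iterSr.
Qed.

Lemma ev_yD p y z : ev p (y + z) = ev p y + ev p z.
Proof.
rewrite /ev /evn -big_split /=; apply: eq_bigr => i _.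
by rewrite iterD (smD HD).
Qed.

Lemma ev_y0 p : ev p 0 = 0.
Proof. by rewrite /ev /evn big1 // => i _; rewrite iter0 (smr0 HD). Qed.

Lemma ev_ysm p l y : ev p (smul l y) = smul l (ev p y).
Proof.
rewrite /ev /evn (sm_sum HD l); apply: eq_bigr => i _.
by rewrite itersm !(sm_mul HD) mulrC.
Qed.

Lemma ev_ysum p (I : Type) (r : seq I) (G : I -> M) :
  ev p (\sum_(i <- r) G i) = \sum_(i <- r) ev p (G i).
Proof. by apply: (big_morph (ev p)); [exact: ev_yD | exact: ev_y0]. Qed.

Lemma ev_psum (I : Type) (r : seq I) (G : I -> {poly C}) y :
  ev (\sum_(i <- r) G i) y = \sum_(i <- r) ev (G i) y.
Proof. by apply: (big_morph (fun p => ev p y)); [move=> p q; exact: ev_add | exact: ev0]. Qed.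

Lemma ev_grade a p y : grade a y -> grade a (ev p y).
Proof.
move=> gy; apply: (gr_sum HG) => i; apply: (gr_sm HG).
exact: itergr.
Qed.

Lemma ev_mul p q y : ev (p * q) y = ev p (ev q y).
Proof.
elim/poly_ind: p q y => [|p c IH] q y; first by rewrite mul0r !ev0.
rewrite mulrDl -mulrA mul_polyC ev_add IH ev_Xmul ev_scale.
rewrite ev_add ev_C mulrC ev_Xmul.
by rewrite !ev_T.
Qed.

Lemma ev1 y : ev 1 y = y.
Proof. by rewrite ev_C (sm1 HD). Qed.

Lemma ev_XsubC l y : ev ('X - l%:P) y = T y - smul l y.
Proof.
rewrite -[X in X - _]mulr1 -polyCN ev_add ev_Xmul ev1 ev_C.
by rewrite (sm_oppl HD).
Qed.

End Ev.

Lemma ker_nz (n : nat) (B : 'M[C]_(n.+1, n)) :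
  exists cv : 'rV[C]_(n.+1), cv != 0 /\ cv *m B = 0.
Proof.
have hk : kermx B != 0.
  rewrite -mxrank_eq0 mxrank_ker subn_eq0 -ltnNge.
  exact: leq_ltn_trans (rank_leq_col B) (ltnSn n).
have [i hi] : exists i, row i (kermx B) != 0.
  apply: NNPP => H; move/eqP: hk; apply; apply/row_matrixP => i.
  rewrite row0; apply/eqP; apply: negbNE; apply/negP => hi; apply: H; by exists i.
exists (row i (kermx B)); split => //.
by rewrite -row_mul mulmx_ker row0.
Qed.

Section Dix.
Variables (d : nat) (A : seq (Zd d)) (M : zmodType) (act : (F d -> F d) -> M -> M)
  (grade : Zd d -> M -> Prop).
Hypothesis HD : isDModule A act.
Hypothesis HG : isGraded A act grade.
Hypothesis HS : gradedSimple A act grade.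
Variables (x : M) (a0 : Zd d).
Hypothesis gx : grade a0 x.
Hypothesis nx : x != 0.
Variable j : 'I_d.
Implicit Types (l mu : C) (y z : M) (p q : {poly C}) (g : Zd d -> C).

Local Notation smul := (smul act).
Local Notation T := (act (sop j)).
Local Notation ev := (ev act j).

Lemma gen0 z y : grade a0 z -> z != 0 -> grade a0 y ->
  exists g, IsPoly g /\ y = act (mulop g) z.
Proof.
move=> gz nz gy; have [g [Pg _ E]] := gen HD HG HS gz nz gy.
by exists g; split => //; rewrite E subrr -mulop_comp0.
Qed.

Lemma mulop_T g y : IsPoly g -> act (mulop g) (T y) = T (act (mulop g) y).
Proof.
move=> Pg; rewrite -!(act_comp HD); try exact: inD_sop; try exact: inD_mulop.
congr act; apply: op_ext => p e; rewrite /opcomp /mulop !sopE; ring.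
Qed.

Lemma caseA : (exists mu z, [/\ grade a0 z, z != 0 & T z = smul mu z]) ->
  exists mu, forall y, grade a0 y -> T y = smul mu y.
Proof.
move=> [mu [z [gz nz hz]]]; exists mu => y gy.
have [g [Pg ->]] := gen0 gz nz gy.
by rewrite -mulop_T // hz (smul_comm HD) //; exact: inD_mulop.
Qed.

Section CaseB.
Hypothesis hinj : forall mu z, grade a0 z -> T z = smul mu z -> z = 0.

Lemma u_ex mu : exists u, [/\ grade a0 u, T u - smul mu u = x & spanx act x u].
Proof.
set z := T x - smul mu x.
have gz : grade a0 z.
  apply: (grB HG); first by apply: (gr_act0 HG) => //; exact: inDdeg_sop.
  exact: (gr_sm HG).
have nz : z != 0.
  apply/negP => /eqP /eqP; rewrite subr_eq0 => /eqP /(hinj gx) ex.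
  by move: nx; rewrite ex eqxx.
have [g [Pg E]] := gen0 gz nz gx.
exists (act (mulop g) x); split.
- by apply: (gr_act0 HG) => //; exact: inDdeg_mulop.
- by rewrite -mulop_T // -(smul_comm HD) -?(actB HD) -?E //; exact: inD_mulop.
- by apply: (span_mulop HD) => //; exact: (span_x HD).
Qed.

Definition uf mu := proj1_sig (constructive_indefinite_description _ (u_ex mu)).
Lemma uf_spec mu : [/\ grade a0 (uf mu), T (uf mu) - smul mu (uf mu) = x & spanx act x (uf mu)].
Proof. by rewrite /uf; case: constructive_indefinite_description. Qed.

Lemma prod_nz (rs : seq C) y : grade a0 y -> y != 0 ->
  ev (\prod_(r <- rs) ('X - r%:P)) y != 0.
Proof.
move=> gy ny; elim: rs => [|r rs IH]; first by rewrite big_nil (ev1 HD).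
rewrite big_cons (ev_mul HD) (ev_XsubC HD).
apply/negP => /eqP /eqP; rewrite subr_eq0 => /eqP h.
have := hinj (ev_grade HG j _ gy) h; by move/eqP; rewrite (negbTE IH).
Qed.

Lemma indep k (ms : seq C) (c : 'I_k -> C) : size ms = k -> uniq ms ->
  \sum_(i < k) smul (c i) (uf ms`_i) = 0 -> forall i, c i = 0.
Proof.
move=> hsz hu hsum i0.
pose Qi (i : 'I_k) := \prod_(m <- rem ms`_i ms) ('X - m%:P).
pose Qp := \prod_(m <- ms) ('X - m%:P).
have hin : forall i : 'I_k, ms`_i \in ms by move=> i; apply: mem_nth; rewrite hsz.
have hQ : forall i : 'I_k, Qp = Qi i * ('X - (ms`_i)%:P).
  by move=> i; rewrite /Qp (big_rem ms`_i) //= mulrC.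
have hev : forall i : 'I_k, ev Qp (uf ms`_i) = ev (Qi i) x.
  by move=> i; rewrite (hQ i) (ev_mul HD) (ev_XsubC HD); case: (uf_spec ms`_i) => _ -> _.
set f := \sum_(i < k) c i *: Qi i.
have evf : ev f x = 0.
  rewrite (ev_psum HD).
  under eq_bigr => i _ do rewrite (ev_scale HD) -hev -(ev_ysm HD).
  by rewrite -(ev_ysum HD) hsum (ev_y0 HD).
have f0 : f = 0.
  apply: NNPP => /eqP nf.
  have [rs Hf] := closed_field_poly_normal f.
  move: evf; rewrite Hf (ev_scale HD) => /(sm_inj HD) h.
  have : lead_coef f != 0 by rewrite lead_coef_eq0.
  move=> /h {}h; move: (prod_nz rs gx nx); by rewrite h eqxx.
have : f.[ms`_i0] = 0 by rewrite f0 horner0.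
rewrite /f horner_sum (bigD1 i0) //= big1 ?addr0.
  rewrite hornerZ => /eqP; rewrite mulf_eq0 => /orP [/eqP //|].
  rewrite /Qi horner_prod; move/negP; case.
  apply/negP; rewrite prodf_seq_neq0; apply/allP => m hm /=.
  rewrite hornerXsubC subr_eq0; apply/negP => /eqP E.
  by move: hm; rewrite -E mem_rem_uniqF.
move=> i ni; rewrite hornerZ /Qi horner_prod.
rewrite (big_rem ms`_i0) /=; last first.
  rewrite mem_rem_uniq // inE hin andbT.
  by rewrite nth_uniq ?hsz // eq_sym.
by rewrite hornerXsubC subrr mul0r mulr0.
Qed.

Lemma caseB_false : False.
Proof.
pose Qn := fun n (r : Rdefinitions.R) => exists c : nat -> C,
  uf (Complex r 0) = \sum_(i < n) smul (c i) (wv act x i).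
apply: (@no_cover Qn).
  move=> r; case: (uf_spec (Complex r 0)) => _ _ [n [c E]]; by exists n, c.
move=> n l ul hl; rewrite leqNgt; apply/negP => ln.
set l' := take n.+1 l.
have sz : size l' = n.+1 by rewrite size_takel.
have Hk : forall k : 'I_n.+1, Qn n (nth 0 l' k).
  move=> k; apply: hl; apply: (@mem_take n.+1); apply: mem_nth.
  by rewrite sz.
pose cf := fun k : 'I_n.+1 => proj1_sig (constructive_indefinite_description _ (Hk k)).
have hcf : forall k : 'I_n.+1, uf (Complex (nth 0 l' k) 0) =
    \sum_(i < n) smul (cf k i) (wv act x i).
  by move=> k; rewrite /cf; case: constructive_indefinite_description.
pose B := \matrix_(k < n.+1, i < n) cf k i.
have [cv [ncv hcv]] := ker_nz B.
set ms := map (fun r => (Complex r 0 : C)) l'.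
have szm : size ms = n.+1 by rewrite size_map.
have um : uniq ms.
  rewrite map_inj_uniq; first exact: take_uniq.
  by move=> a b [].
have hs : \sum_(k < n.+1) smul (cv 0 k) (uf ms`_k) = 0.
  transitivity (\sum_(k < n.+1) \sum_(i < n) smul (cv 0 k * B k i) (wv act x i)).
    apply: eq_bigr => k _.
    rewrite (nth_map 0) ?sz // hcf (sm_sum HD); apply: eq_bigr => i _.
    by rewrite (sm_mul HD) mxE.
  rewrite exchange_big /= big1 // => i _.
  rewrite -(sm_suml HD).
  have -> : \sum_(k < n.+1) cv 0 k * B k i = (cv *m B) 0 i by rewrite !mxE.
  by rewrite hcv mxE (sm0 HD).
have := indep szm um hs.
move=> h; move/negP: ncv; apply; apply/eqP/rowP => k.
by rewrite mxE h.
Qed.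

End CaseB.

Lemma eigen : exists mu, forall y, grade a0 y -> T y = smul mu y.
Proof.
case: (classic (exists mu z, [/\ grade a0 z, z != 0 & T z = smul mu z])) => [h|h].
  exact: caseA.
exfalso; apply: caseB_false => mu z gz hz.
apply: NNPP => nz; apply: h; exists mu, z; split => //.
by apply/negP => /eqP.
Qed.

End Dix.

Unset Implicit Arguments.

Theorem proposition4p5 (d : nat) (A : seq (Zd d)) (M : zmodType)
  (act : (F d -> F d) -> M -> M) (grade : Zd d -> M -> Prop) :
  generates_Zd A ->
  isDModule A act ->
  isGraded A act grade ->
  gradedSimple A act grade ->
  exists alpha : 'I_d -> C, isoL A act alpha.
Proof.
move=> _ HD HG HS.
have [x [a0 [gx nx]]] : exists x a0, grade a0 x /\ x != 0.
  case: (HS) => [[y ny] _]; case: (HG) => _ _ H3 _ _.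
  have [s [f [us gf E]]] := H3 y.
  apply: NNPP => H; move/negP: ny; apply; apply/eqP; rewrite E big1 // => a _.
  apply: NNPP => fa; apply: H; exists (f a), a; split => //.
  by apply/negP => /eqP.
have Hmu := eigen HD HG HS gx nx.
pose mu := fun j => proj1_sig (constructive_indefinite_description _ (Hmu j)).
have hmu : forall j y, grade a0 y -> act (sop j) y = smul act (mu j) y.
  by move=> j; rewrite /mu; case: constructive_indefinite_description.
have hx : forall j, act (sop j) x = smul act (mu j) x by move=> j; apply: hmu.
exists mu; split.
  split; first by exists x.
  move=> N HN.
  have GN : isGradedSubmodule A act grade N.
    split => // y s f Ny us gs E a as_.
    pose w := fun (b : Zd d) (j : 'I_d) => mu j + ((b - a0) 0 j)%:~R.
    apply: (separate HD (w := w) HN _ (erefl (size s)) us) => //.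
    - by move=> b b' j; rewrite /w !subE !intrB; ring.
    - move=> b bs j; exact: (weight HD HG HS gx nx hx j (gs b bs)).
    - by rewrite -E.
  by case: HS => _ /(_ N GN).
exists x; split; first by move=> i; apply: hx.
move=> y; exact: (Nx_full HD HG HS gx nx y).
Qed.
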